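(* Every language in SNP can be described by a primitive canonical formula. Moreover, if the original canonical formula is monotone, or monadic, or without inequality, then the primitive formula can be chosen to satisfy the same restrictions.
   Context: Structures are finite relational structures of a fixed finite signature $\Delta$; a language is a class of such structures closed under isomorphism. A language $L$ is in SNP if it is the class of structures $\mathbf A$ satisfying a canonical formula \[\exists \Pi\ \forall \overline{x}\ \bigwedge_i \neg\big(\alpha_i\wedge\beta_i\wedge\varepsilon_i\big),\] where $\Pi$ is a finite set of existentially quantified relation symbols (''proof relations'') on the universe of $\mathbf A$, $\overline x$ is a tuple of first-order variables, each $\alpha_i$ is a conjunction of atoms or negated atoms $R(\overline x)$, $\neg R(\overline x)$ with $R\in\Delta$ (input relations), each $\beta_i$ is a conjunction of atoms or negated atoms $P(\overline x)$, $\neg P(\overline x)$ with $P\in\Pi$, and each $\varepsilon_i$ is a conjunction of inequalities $x\neq y$ between variables. The formula is monotone if no $\alpha_i$ contains a negated atom; monadic if all $P\in\Pi$ are unary; without inequality if no $\varepsilon_i$ occurs. The formula is primitive if for every clause $\alpha_i\wedge\beta_i\wedge\varepsilon_i$, every existential relation $P\in\Pi$ of arity $r$ and all variables $x_1,\dots,x_r$ occurring in that clause, either the atom $P(x_1,\dots,x_r)$ or its negation is a conjunct of the clause. *)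

(* Defs.v *)
From mathcomp Require Import all_boot.
From Stdlib Require List.
Set Implicit Arguments. Unset Strict Implicit. Unset Printing Implicit Defensive.

Inductive lit (S : Type) (ar : S -> nat) (V : Type) : Type :=
  Lit (pos : bool) (R : S) (args : (ar R).-tuple V).
Arguments Lit {S ar V} pos R args.

Definition lit_pos (S : Type) (ar : S -> nat) (V : Type) (l : lit ar V) : bool := let: Lit b _ _ := l in b.
Definition lit_vars (S : Type) (ar : S -> nat) (V : Type) (l : lit ar V) : seq V := let: Lit _ _ t := l in val t.

Definition lit_holds S (ar : S -> nat) V (A : Type)
  (I : forall R : S, pred ((ar R).-tuple A)) (s : V -> A) (l : lit ar V) : bool :=
  let: Lit b R t := l in I R (map_tuple s t) == b.

Section Formulas.
Variables (D : finType) (arD : D -> nat).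

Record structure := Structure {
  univ : finType;
  interp : forall R : D, pred ((arD R).-tuple univ) }.

(* a language: a class of structures (isomorphism closure is automatic for
   languages described by a formula) *)
Definition language := structure -> Prop.

Record clause (V : Type) (P : Type) (arP : P -> nat) := Clause {
  alpha : seq (lit arD V);
  beta  : seq (lit arP V);
  eps   : seq (V * V) }.

Definition clause_vars (V P : Type) (arP : P -> nat) (c : clause V arP) : seq V :=
  flatten (map (@lit_vars _ _ _) (alpha c)) ++
  flatten (map (@lit_vars _ _ _) (beta c)) ++
  flatten [seq [:: e.1; e.2] | e <- eps c].

(* canonical formula  exists Pi forall x_1..x_nvar  /\_i ~(alpha_i /\ beta_i /\ eps_i)
   with Pi = {P_0, ..., P_(npi-1)} of arities arP *)
Record formula := Formula {
  nvar : nat;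
  npi : nat;
  arP : 'I_npi -> nat;
  clauses : seq (clause 'I_nvar arP) }.

Definition clause_holds (A : structure) (V P : Type) (arP : P -> nat)
  (IP : forall p : P, pred ((arP p).-tuple (univ A))) (s : V -> univ A)
  (c : clause V arP) : bool :=
  [&& all (lit_holds (@interp A) s) (alpha c),
      all (lit_holds IP s) (beta c) &
      all (fun e => s e.1 != s e.2) (eps c)].

Definition models (F : formula) (A : structure) : Prop :=
  exists IP : forall p : 'I_(npi F), pred ((arP p).-tuple (univ A)),
    forall s : 'I_(nvar F) -> univ A,
      all (fun c => ~~ clause_holds IP s c) (clauses F).

Definition describes (F : formula) (L : language) : Prop :=
  forall A : structure, L A <-> models F A.

Definition in_SNP (L : language) : Prop := exists F, describes F L.

Definition monotone (F : formula) : Prop :=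
  all (fun c => all (@lit_pos _ _ _) (alpha c)) (clauses F).

Definition monadic (F : formula) : Prop := forall p : 'I_(npi F), arP p = 1.

Definition without_inequality (F : formula) : Prop :=
  all (fun c => nilp (eps c)) (clauses F).

Definition primitive (F : formula) : Prop :=
  forall c, List.In c (clauses F) ->
  forall (p : 'I_(npi F)) (t : (arP p).-tuple 'I_(nvar F)),
    (forall i, tnth t i \in clause_vars c) ->
    exists b : bool, List.In (Lit b p t) (beta c).

End Formulas.

(* Main.v *)
Require Import Defs.
From mathcomp Require Import all_boot.
From Stdlib Require List.

Lemma in_flatten_map (A B : Type) (g : A -> seq B) (s : seq A) x :
  List.In x (flatten (map g s)) -> exists y, List.In y s /\ List.In x (g y).
Proof.
elim: s => [|a s IH] //= H; case: (List.in_app_or _ _ _ H) => {}H.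
  by exists a; split; [left|].
by case: (IH H) => y [H1 H2]; exists y; split; [right|].
Qed.

Arguments in_flatten_map {A B g s x}.

Lemma mem_In (T : eqType) (x : T) (s : seq T) : x \in s -> List.In x s.
Proof.
elim: s => [|a s IH] //=; rewrite inE => /orP [/eqP->|H]; [by left|by right; apply: IH].
Qed.

Lemma all_flatten_map (A B : Type) (g : A -> seq B) (a : pred B) (s : seq A) :
  all a (flatten (map g s)) = all (fun y => all a (g y)) s.
Proof. by elim: s => [|y s IH] //=; rewrite all_cat IH. Qed.

Theorem lemma4 (D : finType) (arD : D -> nat) (L : language arD)
  (F : formula arD) :
  describes F L ->
  exists G : formula arD,
    [/\ primitive G, describes G L,
        monotone F -> monotone G,
        monadic F -> monadic G &
        without_inequality F -> without_inequality G].
Proof.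
move=> HF.
pose atom : finType := Finite.clone {p : 'I_(npi F) & (arP p).-tuple 'I_(nvar F)} _.
pose mkL (f : {ffun atom -> bool}) (a : atom) : lit (@arP _ _ F) 'I_(nvar F) :=
  Lit (f a) (tag a) (tagged a).
pose ext (c : clause arD 'I_(nvar F) (@arP _ _ F)) (f : {ffun atom -> bool}) :=
  Clause (alpha c) (beta c ++ map (mkL f) (enum atom)) (eps c).
pose G := Formula (flatten (map (fun c => map (ext c) (enum {ffun atom -> bool})) (clauses F))).
exists G; split.
- move=> c Hc; case: (in_flatten_map Hc) => c0 [_ Hc0].
  case: (proj1 (List.in_map_iff _ _ _) Hc0) => f [<- _] p t _.
  exists (f (Tagged _ t)); simpl.
  apply: List.in_or_app; right.
  change (Lit (f (Tagged _ t)) p t) with (mkL f (Tagged (fun p => (arP p).-tuple 'I_(nvar F)) t)).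
  apply: List.in_map; apply: mem_In; exact: mem_enum.
- move=> A; rewrite HF; split=> -[IP H]; exists IP => s; move: (H s);
    rewrite /G /= all_flatten_map.
  + apply: sub_all => c Hc; rewrite all_map; apply/allP => f _ /=.
    apply: contra Hc; rewrite /clause_holds /= all_cat.
    by case/and3P => -> /andP [-> _] ->.
  + apply: sub_all => c; rewrite all_map => /allP Hc.
    pose f0 := [ffun a : atom => IP (tag a) (map_tuple s (tagged a))].
    have := Hc f0 (mem_enum _ _); apply: contra => /=.
    rewrite /clause_holds /= all_cat; case/and3P => -> -> -> /=.
    rewrite andbT all_map; apply/allP => a _.
    by rewrite /mkL /= ffunE eqxx.
- rewrite /monotone /G /= all_flatten_map; apply: sub_all => c Hc.
  by rewrite all_map; apply/allP.
- by [].
- rewrite /without_inequality /G /= all_flatten_map; apply: sub_all => c Hc.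
  by rewrite all_map; apply/allP.
Qed.
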